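(* Let $M$ be a nonempty compact convex subset of a locally convex topological vector space $V$, and let $f:M\to M$ be continuous and quasi-affine. Then $f$ is strongly quasi-affine, i.e. $f(\overline{co}\,A)\subseteq\overline{co}\,f(A)$ for every subset $A\subseteq M$.
   Context: For $A\subseteq V$, $co\,A$ denotes the convex hull of $A$ and $\overline{co}\,A$ its closed convex hull. A map $f:M\to M$ is quasi-affine if $f(co\,A)\subseteq co\,f(A)$ for every subset $A\subseteq M$. *)

(* Defs.v *)
From HB Require Import structures.
From mathcomp Require Import all_boot all_order all_algebra.
From mathcomp Require Import all_classical all_reals all_analysis.
Set Implicit Arguments. Unset Strict Implicit. Unset Printing Implicit Defensive.
Import Order.TTheory GRing.Theory Num.Theory.
Local Open Scope classical_set_scope.
Local Open Scope ring_scope.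

Definition co (R : realType) (V : tvsType R) (A : set V) : set V :=
  \bigcap_(B in [set B : set V | convex_set (B : set (convex_lmodType V)) /\ A `<=` B]) B.

Definition cco (R : realType) (V : tvsType R) (A : set V) : set V :=
  \bigcap_(B in [set B : set V |
     [/\ convex_set (B : set (convex_lmodType V)), closed B & A `<=` B]]) B.

Definition quasi_affine (R : realType) (V : tvsType R) (M : set V) (f : V -> V) :=
  forall A, A `<=` M -> f @` (co A) `<=` co (f @` A).

Definition strongly_quasi_affine (R : realType) (V : tvsType R) (M : set V) (f : V -> V) :=
  forall A, A `<=` M -> f @` (cco A) `<=` cco (f @` A).

(* Main.v *)
Require Import Defs.
From HB Require Import structures.
From mathcomp Require Import all_boot all_order all_algebra.
From mathcomp Require Import all_classical all_reals all_analysis.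
Import Order.TTheory GRing.Theory Num.Theory.
Local Open Scope classical_set_scope.
Local Open Scope ring_scope.
Local Open Scope convex_scope.

Lemma closure_convex (R : realType) (V : tvsType R) (C : set V) :
  convex_set (C : set (convex_lmodType V)) ->
  convex_set (closure C : set (convex_lmodType V)).
Proof.
move=> cC x y l; rewrite !inE => xC yC.
pose g := fun p : V * V => l%:num *: p.1 + (1 - l%:num) *: p.2.
have gc : g @ nbhs (x, y) --> g (x, y).
  apply: (@continuous2_cvg _ V V V _ _ (fun p : V * V => l%:num *: p.1)
     (fun p : V * V => (1 - l%:num) *: p.2) +%R).
  - have := @add_continuous V (l%:num *: x, (1 - l%:num) *: y); exact.
  - apply: (@continuous2_cvg _ R^o V V _ _ (fun=> l%:num) fst (fun a b => a *: b)).
    + exact: (@scale_continuous R V (_, _)).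
    + exact: cvg_cst.
    + exact: cvg_fst.
  - apply: (@continuous2_cvg _ R^o V V _ _ (fun=> (1 - l%:num)) snd (fun a b => a *: b)).
    + exact: (@scale_continuous R V (_, _)).
    + exact: cvg_cst.
    + exact: cvg_snd.
have -> : x <| l |> y = g (x, y) by [].
move=> B /gc /= [[Bx By] /= [nBx nBy] sB].
have [a [Ca Bxa]] := xC _ nBx.
have [b [Cb Byb]] := yC _ nBy.
exists (g (a, b)); split; last exact: sB.
have := cC a b l; rewrite !inE; exact.
Qed.

Section co.
Context (R : realType) (V : tvsType R).
Implicit Types A B : set V.

Lemma co_convex A : convex_set (co A : set (convex_lmodType V)).
Proof.
move=> x y l; rewrite !inE => xA yA B [cB AB].
have := cB x y l; rewrite !inE; apply; [exact: xA | exact: yA].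
Qed.

Lemma sub_co A : A `<=` co A.
Proof. by move=> x Ax B [_ AB]; exact: AB. Qed.

Lemma co_min A B : convex_set (B : set (convex_lmodType V)) -> A `<=` B -> co A `<=` B.
Proof. by move=> cB AB x; apply. Qed.

Lemma cco_min A B : convex_set (B : set (convex_lmodType V)) -> closed B -> A `<=` B ->
  cco A `<=` B.
Proof. by move=> cB clB AB x; apply. Qed.
End co.
Arguments co_convex {R V}.
Arguments sub_co {R V A}.
Arguments co_min {R V A B}.
Arguments cco_min {R V A B}.
Arguments closure_convex {R V C}.

Theorem mainTheorem4 (R : realType) (V : tvsType R) (hV : hausdorff_space V)
  (M : set V) (f : V -> V) :
  M !=set0 -> compact M -> convex_set (M : set (convex_lmodType V)) ->
  f @` M `<=` M -> {within M, continuous f} -> quasi_affine M f ->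
  strongly_quasi_affine M f.
Proof.
move=> _ cM convM fM fc qa A AM z [x xA <-].
have Mcl := compact_closed hV cM.
have coAM : co A `<=` M := co_min convM AM.
have xM : M x := cco_min convM Mcl AM _ xA.
have xcl : closure (co A) x.
  apply: (cco_min (closure_convex (co_convex A)) (@closed_closure _ _)) _ xA.
  by move=> a /sub_co /subset_closure.
move=> B [cB clB fAB]; apply: clB => U nU.
have := (subspace_continuousP M f).1 fc x xM U nU.
move=> /xcl [y [coy Uy]].
exists (f y); split; last exact: Uy (coAM y coy).
apply: (co_min cB fAB); apply: (qa A AM); exists y => //.
Qed.
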